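(* Every completely dependent three-dimensional copula is generalized simplified.
   Context: $\mathbb{I}=[0,1]$, $\lambda$ Lebesgue measure; points of $\mathbb{I}^3$ are written $(\mathbf{u},v)$ with $\mathbf{u}=(u_1,u_2)\in\mathbb{I}^2$. For a three-dimensional copula $C$, its Markov kernel $K_C:\mathbb{I}\times\mathcal{B}(\mathbb{I}^2)\to\mathbb{I}$ is (a version of) the regular conditional distribution of $(U_1,U_2)$ given $U_3=v$, $(U_1,U_2,U_3)\sim C$, so $C(\mathbf{u},v)=\int_{[0,v]}K_C(t,[\mathbf{0},\mathbf{u}])\,d\lambda(t)$. The conditional univariate distribution functions are $F_{1|3}(u_1|t)=K_C(t,[0,u_1]\times\mathbb{I})$ and $F_{2|3}(u_2|t)=K_C(t,\mathbb{I}\times[0,u_2])$. A copula $C$ is completely dependent (w.r.t. the last coordinate) if there exist $\lambda$-preserving maps $h_1,h_2:\mathbb{I}\to\mathbb{I}$ (i.e. $\lambda(h_i^{-1}(F))=\lambda(F)$ for all Borel $F$) such that $K(v,E)=\mathbf{1}_E(h_1(v),h_2(v))$ is a Markov kernel of $C$. A three-dimensional copula $C$ is generalized simplified if there exists a bivariate copula $A$ with $C(\mathbf{u},v)=\int_{[0,v]}A(F_{1|3}(u_1|t),F_{2|3}(u_2|t))\,d\lambda(t)$ for all $(\mathbf{u},v)\in\mathbb{I}^2\times\mathbb{I}$. *)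

(* Defs.v *)
From HB Require Import structures.
From mathcomp Require Import all_boot all_order all_algebra.
From mathcomp Require Import all_classical all_reals all_analysis measurable_realfun.
Set Implicit Arguments. Unset Strict Implicit. Unset Printing Implicit Defensive.
Import Order.TTheory GRing.Theory Num.Theory.
Import numFieldNormedType.Exports.
Local Open Scope classical_set_scope.
Local Open Scope ring_scope.

Definition unit_I {R : realType} : set R := `[0, 1]%classic.

Definition seg0 {R : realType} (x : R) : set R := `[0, x]%classic.

Definition copula2 {R : realType} (A : R -> R -> R) : Prop :=
  (forall x, unit_I x -> A 0 x = 0 /\ A x 0 = 0) /\
  (forall x, unit_I x -> A 1 x = x /\ A x 1 = x) /\
  (forall x1 x2 y1 y2, unit_I x1 -> unit_I x2 -> unit_I y1 -> unit_I y2 ->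
     x1 <= x2 -> y1 <= y2 ->
     0 <= A x2 y2 - A x1 y2 - A x2 y1 + A x1 y1).

Definition copula3 {R : realType} (C : R -> R -> R -> R) : Prop :=
  (forall x y, unit_I x -> unit_I y ->
     C 0 x y = 0 /\ C x 0 y = 0 /\ C x y 0 = 0) /\
  (forall x, unit_I x -> C x 1 1 = x /\ C 1 x 1 = x /\ C 1 1 x = x) /\
  (forall a1 b1 a2 b2 a3 b3,
     unit_I a1 -> unit_I b1 -> unit_I a2 -> unit_I b2 ->
     unit_I a3 -> unit_I b3 -> a1 <= b1 -> a2 <= b2 -> a3 <= b3 ->
     0 <= C b1 b2 b3 - C a1 b2 b3 - C b1 a2 b3 - C b1 b2 a3
          + C a1 a2 b3 + C a1 b2 a3 + C b1 a2 a3 - C a1 a2 a3).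

(* K : I x B(I^2) -> I is a Markov kernel of C (a version of the regular
   conditional distribution of (U1,U2) given U3 = t).  Probability measures
   on B(I^2) are represented as probability measures on the Borel sets of
   R x R carrying full mass on I^2; values of K at t outside I are irrelevant. *)
Definition markov_kernel_of {R : realType} (C : R -> R -> R -> R)
    (K : R -> set (R * R) -> \bar R) : Prop :=
  (forall t, unit_I t ->
     K t set0 = 0%E /\
     (forall E, measurable E -> (0 <= K t E)%E) /\
     semi_sigma_additive (K t) /\
     K t setT = 1%E /\ K t (unit_I `*` unit_I) = 1%E) /\
  (forall E, measurable E -> measurable_fun (unit_I : set R) (fun t : R => K t E : \bar R)) /\
  (forall u1 u2 v, unit_I u1 -> unit_I u2 -> unit_I v ->
     (C u1 u2 v)%:E =
       (\int[@lebesgue_measure R]_(t in seg0 v)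
          K t (seg0 u1 `*` seg0 u2))%E).

Definition lambda_preserving {R : realType} (h : R -> R) : Prop :=
  (forall x, unit_I x -> unit_I (h x)) /\
  measurable_fun unit_I h /\
  (forall F : set R, measurable F -> F `<=` unit_I ->
     @lebesgue_measure R (unit_I `&` h @^-1` F) = @lebesgue_measure R F).

Definition completely_dependent {R : realType} (C : R -> R -> R -> R) : Prop :=
  exists h1 h2 : R -> R, lambda_preserving h1 /\ lambda_preserving h2 /\
    markov_kernel_of C (fun v E => (\1_E (h1 v, h2 v))%:E).

Definition F13 {R : realType} (K : R -> set (R * R) -> \bar R) (u1 t : R) : R :=
  fine (K t (seg0 u1 `*` unit_I)).
Definition F23 {R : realType} (K : R -> set (R * R) -> \bar R) (u2 t : R) : R :=
  fine (K t (unit_I `*` seg0 u2)).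

Definition generalized_simplified {R : realType} (C : R -> R -> R -> R) : Prop :=
  exists A : R -> R -> R, copula2 A /\
    forall K, markov_kernel_of C K ->
      forall u1 u2 v, unit_I u1 -> unit_I u2 -> unit_I v ->
        (C u1 u2 v)%:E =
          (\int[@lebesgue_measure R]_(t in seg0 v)
             (A (F13 K u1 t) (F23 K u2 t))%:E)%E.

(* Main.v *)
Require Import Defs.
From HB Require Import structures.
From mathcomp Require Import all_boot all_order all_algebra.
From mathcomp Require Import all_classical all_reals all_analysis measurable_realfun.
From mathcomp Require Import lra.
Set Implicit Arguments. Unset Strict Implicit. Unset Printing Implicit Defensive.
Import Order.TTheory GRing.Theory Num.Theory.
Import numFieldNormedType.Exports.
Local Open Scope classical_set_scope.
Local Open Scope ring_scope.

Lemma halfline_I {R : realType} (w : R) :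
  (w < 0)%R /\ `]-oo, w] `&` unit_I = set0 \/
  (0 <= w <= 1)%R /\ `]-oo, w] `&` unit_I = seg0 w \/
  (1 < w)%R /\ `]-oo, w] `&` unit_I = seg0 1.
Proof.
have [w0|w0] := ltP w 0.
  left; split => //; apply/seteqP; split => // x /=.
  rewrite /unit_I !in_itv /= => -[xw /andP[x0 _]].
  have xw' : (x <= w)%R := xw. have x0' : (0 <= x)%R := x0.
  by have := le_lt_trans xw' w0; rewrite ltNge x0'.
have [w1|w1] := leP w 1.
  right; left; split; first by [].
  apply/seteqP; split => x /=; rewrite /unit_I /seg0 !in_itv /=.
    move=> [xw /andP[x0 _]].
    have xw' : (x <= w)%R := xw. have x0' : (0 <= x)%R := x0.
    by apply/andP; split; [exact: x0'|exact: xw'].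
  move=> /andP[x0 xw].
  have xw' : (x <= w)%R := xw. have x0' : (0 <= x)%R := x0.
  split; first exact: xw'.
  by apply/andP; split; [exact: x0'|exact: (le_trans xw' w1)].
right; right; split => //.
apply/seteqP; split => x /=; rewrite /unit_I /seg0 !in_itv /=.
  move=> [xw /andP[x0 x1]].
  have x1' : (x <= 1)%R := x1. have x0' : (0 <= x)%R := x0.
  by apply/andP; split; [exact: x0'|exact: x1'].
move=> /andP[x0 x1].
have x1' : (x <= 1)%R := x1. have x0' : (0 <= x)%R := x0.
split; first exact: (le_trans x1' (ltW w1)).
by apply/andP; split; [exact: x0'|exact: x1'].
Qed.


Section core.
Context {R : realType}.
Local Open Scope ereal_scope.
Notation mu := (@lebesgue_measure R).

Definition indm (g : measurableTypeR R -> \bar R) (mg : measurable_fun setT g)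
  (g0 : forall x, 0 <= g x) : set (measurableTypeR R) -> \bar R :=
  fun A => \int[mu]_(x in A) g x.

Section indm_meas.
Variables (g : measurableTypeR R -> \bar R) (mg : measurable_fun setT g) (g0 : forall x, 0 <= g x).
Let m0 : indm mg g0 set0 = 0. Proof. exact: integral_set0. Qed.
Let mge0 A : 0 <= indm mg g0 A. Proof. by apply: integral_ge0 => x _; exact: g0. Qed.
Let msa : semi_sigma_additive (indm mg g0).
Proof. exact: (@semi_sigma_additive_nng_induced _ (measurableTypeR R) R mu g mg g0). Qed.
HB.instance Definition _ := isMeasure.Build _ _ _ (indm mg g0) m0 mge0 msa.
End indm_meas.

Lemma core (f1 f2 : R -> \bar R) :
  measurable_fun unit_I f1 -> measurable_fun unit_I f2 ->
  (forall x, unit_I x -> 0 <= f1 x) -> (forall x, unit_I x -> 0 <= f2 x) ->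
  (forall w, unit_I w ->
     \int[mu]_(t in seg0 w) f1 t = \int[mu]_(t in seg0 w) f2 t) ->
  \int[mu]_(t in unit_I) f1 t < +oo ->
  ae_eq mu unit_I f1 f2.
Proof.
move=> mf1 mf2 f10 f20 H Hfin.
have mI : measurable (unit_I : set R) by exact: measurable_itv.
have mg1 : measurable_fun setT (f1 \_ unit_I) by apply/(measurable_restrictT _ mI).
have mg2 : measurable_fun setT (f2 \_ unit_I) by apply/(measurable_restrictT _ mI).
have g10 : forall x, 0 <= (f1 \_ unit_I) x.
  by move=> x; rewrite patchE; case: ifPn => // /set_mem; exact: f10.
have g20 : forall x, 0 <= (f2 \_ unit_I) x.
  by move=> x; rewrite patchE; case: ifPn => // /set_mem; exact: f20.
have m1E A : (indm mg1 g10) A = \int[mu]_(x in A `&` unit_I) f1 x by rewrite integral_mkcondr.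
have m2E A : (indm mg2 g20) A = \int[mu]_(x in A `&` unit_I) f2 x by rewrite integral_mkcondr.
have I1 : unit_I (1%R : R) by rewrite /unit_I /= in_itv /= ler01 lexx.
have m1fin A : measurable A -> (indm mg1 g10) A < +oo.
  move=> mA.
  have le1 : (indm mg1 g10) A <= (indm mg1 g10) setT.
    apply: le_measure; [rewrite inE; exact: mA | rewrite inE; exact: measurableT | exact: subsetT].
  by apply: (le_lt_trans le1); rewrite m1E setTI.
have Phi w : (indm mg1 g10) `]-oo, w] = (indm mg2 g20) `]-oo, w].
  rewrite m1E m2E.
  have [[_ ->]|[[/andP[w0 w1] ->]|[_ ->]]] := halfline_I w.
  - by rewrite !integral_set0.
  - by apply: H; rewrite /unit_I /= in_itv /=; apply/andP; split; [exact: w0|exact: w1].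
  - exact: H.
have m1m2 A : ocitv A -> (indm mg1 g10) A = (indm mg2 g20) A.
  case=> -[a b] _ <- /=.
  have [ab|ba] := ltP a b; last first.
    by rewrite set_itv_ge ?measure0 // bnd_simp -leNgt.
  have U : (`]-oo, b]%classic : set R) = `]-oo, a]%classic `|` `]a, b]%classic.
    by rewrite -itv_bndbnd_setU // bnd_simp ltW.
  have D : (`]-oo, a]%classic : set R) `&` `]a, b]%classic = set0.
    apply/seteqP; split => // x /=; rewrite !in_itv /= => -[xa /andP[ax _]].
    have xa' : (x <= a)%R := xa. have ax' : (a < x)%R := ax.
    by have := lt_le_trans ax' xa'; rewrite ltxx.
  have mA1 : measurable (`]-oo, a] : set R) by exact: measurable_itv.
  have mA2 : measurable (`]a, b] : set R) by exact: measurable_itv.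
  have U1 : (indm mg1 g10) `]-oo, b]%classic =
      (indm mg1 g10) `]-oo, a]%classic + (indm mg1 g10) `]a, b]%classic.
    by rewrite U; exact: (measureU (indm mg1 g10) mA1 mA2 D).
  have U2 : (indm mg2 g20) `]-oo, b]%classic =
      (indm mg2 g20) `]-oo, a]%classic + (indm mg2 g20) `]a, b]%classic.
    by rewrite U; exact: (measureU (indm mg2 g20) mA1 mA2 D).
  have fa : (indm mg1 g10) `]-oo, a] \is a fin_num.
    by rewrite ge0_fin_numE ?measure_ge0 // m1fin.
  have hk : (indm mg1 g10) `]a, b]%classic + (indm mg1 g10) `]-oo, a]%classic
      - (indm mg1 g10) `]-oo, a]%classic = (indm mg1 g10) `]a, b]%classic.
    by rewrite addeK.
  rewrite -[LHS]hk.
  rewrite addeC in U1; rewrite -U1 (Phi b) U2 -(Phi a).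
  by rewrite [X in X - _]addeC addeK.
pose gk := fun k : nat => (`](- (k%:R))%R, (k%:R)%R]%classic : set R).
have cover : \bigcup_k gk k = setT.
  rewrite -subTset => x _ /=.
  exists (Num.bound `|x|)%R => //=; rewrite /gk /= in_itv /=.
  have /andP[h1 h2] : (- (Num.bound `|x|)%:R < x < (Num.bound `|x|)%:R)%R.
    by rewrite -ltr_norml; apply: archi_boundP.
  by apply/andP; split; [exact: h1|exact: (ltW h2)].
have meq A : measurable A -> (indm mg1 g10) A = (indm mg2 g20) A.
  move=> mA.
  apply: (@measure_unique _ R (measurableTypeR R) (@ocitv R)
    gk _ (@ocitvI R) _ cover
    (indm mg1 g10) (indm mg2 g20) m1m2 _ A mA).
  - by [].
  - by move=> k; exact: is_ocitv.
  - by move=> k; apply: m1fin; exact: measurable_itv.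
have mI' : measurable (unit_I : set (measurableTypeR R)) by exact: mI.
apply: (@integral_ae_eq _ (measurableTypeR R) R mu unit_I mI' f2 f1).
- apply/integrableP; split => //.
  have -> : \int[mu]_(x in unit_I) `|f1 x| = \int[mu]_(x in unit_I) f1 x.
    by apply: eq_integral => x /set_mem xI; rewrite gee0_abs //; exact: f10.
  exact: Hfin.
- exact: mf2.
- move=> E EI mE.
  by have h := meq E mE; rewrite m1E m2E setIidl // in h.
Qed.

End core.

Theorem theorem3p2 (R : realType) (C : R -> R -> R -> R) :
  copula3 C -> completely_dependent C -> generalized_simplified C.
Proof.
move=> _ [h1 [h2 [[h1I [mh1 _]] [[h2I [mh2 _]] [_ [HDm HD]]]]]].
exists (fun x y => x * y); split.
  split; first by move=> x _; rewrite mul0r mulr0.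
  split; first by move=> x _; rewrite mul1r mulr1.
  by move=> x1 x2 y1 y2 _ _ _ _ h12 k12; nra.
move=> K [Kp [Km HK]] u1 u2 v u1I u2I vI.
have mI : measurable (unit_I : set R) by exact: measurable_itv.
have I1 : unit_I (1 : R) by rewrite /unit_I /= in_itv /= ler01 lexx.
have sub : seg0 v `<=` unit_I.
  move=> x; rewrite /seg0 /unit_I /= !in_itv /= => /andP[x0 xv].
  move: vI; rewrite /unit_I /= in_itv /= => /andP[_ v1].
  by rewrite x0 (le_trans xv v1).
have mrect1 : measurable (seg0 u1 `*` (unit_I : set R)).
  by apply: measurableX; exact: measurable_itv.
have mrect2 : measurable ((unit_I : set R) `*` seg0 u2).
  by apply: measurableX; exact: measurable_itv.
have ae1 : ae_eq (@lebesgue_measure R) unit_I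
    (fun t => K t (seg0 u1 `*` unit_I))
    (fun t => (\1_(seg0 u1 `*` unit_I) (h1 t, h2 t))%:E).
  apply: core.
  - exact: Km.
  - exact: HDm.
  - by move=> t tI; apply: (Kp t tI).2.1.
  - by move=> t _; rewrite lee_fin indicE ler0n.
  - move=> w wI; transitivity (C u1 1 w)%:E.
      exact: esym (HK u1 1 w u1I I1 wI).
    exact: (HD u1 1 w u1I I1 wI).
  - have -> : (\int[@lebesgue_measure R]_(t in unit_I) K t (seg0 u1 `*` unit_I)
              = (C u1 1 1)%:E)%E.
      exact: esym (HK u1 1 1 u1I I1 I1).
    exact: ltry.
have ae2 : ae_eq (@lebesgue_measure R) unit_I
    (fun t => K t (unit_I `*` seg0 u2))
    (fun t => (\1_(unit_I `*` seg0 u2) (h1 t, h2 t))%:E).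
  apply: core.
  - exact: Km.
  - exact: HDm.
  - by move=> t tI; apply: (Kp t tI).2.1.
  - by move=> t _; rewrite lee_fin indicE ler0n.
  - move=> w wI; transitivity (C 1 u2 w)%:E.
      exact: esym (HK 1 u2 w I1 u2I wI).
    exact: (HD 1 u2 w I1 u2I wI).
  - have -> : (\int[@lebesgue_measure R]_(t in unit_I) K t (unit_I `*` seg0 u2)
              = (C 1 u2 1)%:E)%E.
      exact: esym (HK 1 u2 1 I1 u2I I1).
    exact: ltry.
have mv : measurable (seg0 v : set R) by exact: measurable_itv.
rewrite (HD u1 u2 v u1I u2I vI).
apply: ae_eq_integral => //.
- apply: (measurable_funS mI sub); apply: HDm.
  by apply: measurableX; exact: measurable_itv.
- apply/measurable_EFinP; apply: measurable_funM.
  + apply: (measurableT_comp (fine_measurable measurableT)).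
    exact: (measurable_funS mI sub (Km _ mrect1)).
  + apply: (measurableT_comp (fine_measurable measurableT)).
    exact: (measurable_funS mI sub (Km _ mrect2)).
- move: (@ae_eq_subset _ (measurableTypeR R) R _ _ _ _ _ _ sub ae1)
    (@ae_eq_subset _ (measurableTypeR R) R _ _ _ _ _ _ sub ae2).
  apply: filterS2 => t e1 e2 tv.
  have tI := sub t tv.
  rewrite /F13 /F23 (e1 tv) (e2 tv) /=.
  congr (_%:E); rewrite !indicE !in_setX /=.
  rewrite (mem_set (h1I t tI)) (mem_set (h2I t tI)) andbT /=.
  by case: (h1 t \in seg0 u1); case: (h2 t \in seg0 u2); rewrite ?mulr1 ?mulr0 ?mul0r.
Qed.
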